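(* Let $\mathcal R'$ be a set of rows with the consecutive-ones property, $\pi$ a consecutive-ones ordering of $\mathcal R'$, and $Z$ a row such that $\mathcal R'\cup\{Z\}$ does not have the consecutive-ones property. Let $\mathcal R_Q$ be an overlap component of $\mathcal R'$ containing at least one row that meets $Z$. Let $A'$ be a row of $\mathcal R_Q$ meeting $Z$ whose right endpoint (last column in $\pi$) is leftmost among all rows of $\mathcal R_Q$ meeting $Z$, and let $B'$ be a row of $\mathcal R_Q$ meeting $Z$ whose left endpoint (first column in $\pi$) is rightmost among all rows of $\mathcal R_Q$ meeting $Z$. Then $\mathcal R_Q$ contains a suitable pair for $Z$ with respect to $\pi$ if and only if there is a column $c\notin Z$ lying in $\pi$ strictly after the right endpoint of $A'$ and strictly before the left endpoint of $B'$; in that case $\{A',B'\}$ is a suitable pair for $Z$ with respect to $\pi$.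
   Context: Each row is identified with the set of columns in which it has a 1. A consecutive-ones ordering of a set of rows is an ordering of all columns in which each of these rows occupies consecutive columns; a set of rows has the consecutive-ones property if such an ordering exists. Two rows overlap if they intersect and neither is a subset of the other; an overlap component of a set of rows is the vertex set of a connected component of the graph whose edges join overlapping rows. Suitable pair: distinct rows $A,B\in\mathcal R'$ form a suitable pair for $Z$ with respect to $\pi$ if they belong to the same overlap component of $\mathcal R'$, $A\cap Z\neq\emptyset$, $B\cap Z\neq\emptyset$, and there is a column $c\notin Z$ such that in $\pi$ every column of one of $A,B$ precedes $c$ and $c$ precedes every column of the other. *)

(* Defs.v *)
From mathcomp Require Import all_boot.
Set Implicit Arguments. Unset Strict Implicit. Unset Printing Implicit Defensive.

(* Columns form a finite type T; a row is the set of columns where it has a 1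
   ({set T}); a set of rows is a {set {set T}}.
   An ordering of all columns is a duplicate-free sequence s containing every
   column; the position of column x is index x s. *)

Definition col_ordering (T : finType) (s : seq T) : Prop :=
  uniq s /\ forall x : T, x \in s.

Definition consecutive_in (T : finType) (s : seq T) (A : {set T}) : Prop :=
  forall x y z : T, x \in A -> y \in A ->
    index x s <= index z s -> index z s <= index y s -> z \in A.

Definition C1_ordering (T : finType) (R : {set {set T}}) (s : seq T) : Prop :=
  col_ordering s /\ forall A, A \in R -> consecutive_in s A.

Definition C1P (T : finType) (R : {set {set T}}) : Prop :=
  exists s : seq T, C1_ordering R s.

Definition overlap (T : finType) (A B : {set T}) : bool :=
  [&& A :&: B != set0, ~~ (A \subset B) & ~~ (B \subset A)].

Definition overlap_rel (T : finType) (R : {set {set T}}) : rel {set T} :=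
  fun A B => [&& A \in R, B \in R & overlap A B].

Definition overlap_component (T : finType) (R : {set {set T}})
    (RQ : {set {set T}}) : Prop :=
  exists2 A, A \in R & RQ = [set B in R | connect (overlap_rel R) A B].

(* right (last) and left (first) endpoint positions of a (nonempty) row *)
Definition rend (T : finType) (s : seq T) (A : {set T}) : nat :=
  \max_(x in A) index x s.
Definition lend (T : finType) (s : seq T) (A : {set T}) : nat :=
  \big[minn/size s]_(x in A) index x s.

Definition suitable_pair (T : finType) (R : {set {set T}}) (Z : {set T})
    (s : seq T) (A B : {set T}) : Prop :=
  [/\ A \in R, B \in R & A != B] /\
  (exists RQ, [/\ overlap_component R RQ, A \in RQ & B \in RQ]) /\
  (A :&: Z != set0 /\ B :&: Z != set0) /\
  exists2 c : T, c \notin Z &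
    (forall x y, x \in A -> y \in B -> index x s < index c s < index y s) \/
    (forall x y, x \in B -> y \in A -> index x s < index c s < index y s).

(* Main.v *)
Require Import Defs.
From mathcomp Require Import all_boot.
Set Implicit Arguments.

Lemma rend_ge (T : finType) (s : seq T) (A : {set T}) x :
  x \in A -> index x s <= rend s A.
Proof. by move=> Hx; rewrite /rend; apply: leq_bigmax_cond. Qed.

Lemma lend_le (T : finType) (s : seq T) (A : {set T}) x :
  x \in A -> lend s A <= index x s.
Proof.
move=> Hx; rewrite /lend.
have : x \in index_enum T by rewrite mem_index_enum.
elim: (index_enum T) => [|y r IH] //; rewrite inE big_cons => /orP [/eqP Ey|Hr].
  by rewrite -Ey Hx geq_min leqnn.
have H := IH Hr.
by case: (y \in A) => //; rewrite geq_min H orbT.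
Qed.

Lemma rend_lt (T : finType) (s : seq T) (A : {set T}) k :
  (exists x, x \in A) -> (forall x, x \in A -> index x s < k) -> rend s A < k.
Proof.
move=> /card_gt0P Hc H; rewrite /rend.
have [x0 Hx0 ->] := eq_bigmax_cond (fun y => index y s) Hc.
exact: H.
Qed.

Lemma lend_gt (T : finType) (s : seq T) (A : {set T}) k :
  k < size s -> (forall x, x \in A -> k < index x s) -> k < lend s A.
Proof.
move=> Hk H; rewrite /lend.
apply: (big_ind (fun m => k < m)) => //.
by move=> a b Ha Hb; rewrite leq_min Ha Hb.
Qed.

Theorem mainTheorem7 (T : finType) (R : {set {set T}}) (s : seq T)
    (Z : {set T}) (RQ : {set {set T}}) (A' B' : {set T}) :
  C1_ordering R s ->
  ~ C1P (R :|: [set Z]) ->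
  overlap_component R RQ ->
  (exists2 A, A \in RQ & A :&: Z != set0) ->
  A' \in RQ -> A' :&: Z != set0 ->
  (forall A, A \in RQ -> A :&: Z != set0 -> rend s A' <= rend s A) ->
  B' \in RQ -> B' :&: Z != set0 ->
  (forall B, B \in RQ -> B :&: Z != set0 -> lend s B <= lend s B') ->
  ((exists A B, [/\ A \in RQ, B \in RQ & suitable_pair R Z s A B]) <->
   (exists2 c : T, c \notin Z & rend s A' < index c s < lend s B')) /\
  ((exists2 c : T, c \notin Z & rend s A' < index c s < lend s B') ->
   suitable_pair R Z s A' B').
Proof.
move=> [[_ Hall] _] _ Hcomp _ HA' HA'Z HminA HB' HB'Z HmaxB.
have HRQ : forall X, X \in RQ -> X \in R.
  by case: Hcomp => A0 _ -> X; rewrite inE => /andP[].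
have ex_of : forall X : {set T}, X :&: Z != set0 -> exists x, x \in X.
  by move=> X /set0Pn [x]; rewrite inE => /andP[Hx _]; exists x.
have Hsz : forall c : T, index c s < size s by move=> c; rewrite index_mem.
have part2 : (exists2 c : T, c \notin Z & rend s A' < index c s < lend s B') ->
   suitable_pair R Z s A' B'.
  case=> c Hc /andP[H1 H2].
  split.
    split; [exact: HRQ | exact: HRQ |].
    apply/eqP => E; subst B'.
    have [a Ha] := ex_of _ HA'Z.
    have := leq_trans (lend_le s Ha) (rend_ge s Ha).
    by rewrite leqNgt (ltn_trans H1 H2).
  split; first by exists RQ.
  split; first by [].
  exists c => //; left => x y Hx Hy; apply/andP; split.
    exact: leq_ltn_trans (rend_ge s Hx) H1.
  exact: leq_trans H2 (lend_le s Hy).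
split; last exact: part2.
split; last first.
  by move=> Hc; exists A', B'; split => //; apply: part2.
case=> A [B [HA HB [_ [_ [[HAZ HBZ] [c Hc Hord]]]]]].
exists c => //.
have [a Ha] := ex_of _ HAZ.
have [b Hb] := ex_of _ HBZ.
case: Hord => H.
- have r1 : rend s A < index c s.
    by apply: rend_lt; [exists a | move=> x Hx; case/andP: (H x b Hx Hb)].
  have r2 : index c s < lend s B.
    by apply: lend_gt => // y Hy; case/andP: (H a y Ha Hy).
  apply/andP; split.
    exact: leq_ltn_trans (HminA _ HA HAZ) r1.
  exact: leq_trans r2 (HmaxB _ HB HBZ).
- have r1 : rend s B < index c s.
    by apply: rend_lt; [exists b | move=> x Hx; case/andP: (H x a Hx Ha)].
  have r2 : index c s < lend s A.
    by apply: lend_gt => // y Hy; case/andP: (H b y Hb Hy).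
  apply/andP; split.
    exact: leq_ltn_trans (HminA _ HB HBZ) r1.
  exact: leq_trans r2 (HmaxB _ HA HAZ).
Qed.
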